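(* Assume $A$ is good and $(x,w_x)$ is an optimal pair. Then there exists $k\ge0$ such that $\sigma^k(w_x)\in M$ (the support of the maximizing probability of $A^*$), and for such $k$ the pair $\hat T^{-k}(x,w_x)$ is again an optimal pair, where $\hat T^{-1}(x,w)=(\tau_wx,\sigma w)$.
   Context: $\Sigma=\{0,1\}^{\mathbb N}$; $T$ and $\sigma$ denote the shift acting on points $x$ and $w$ respectively; $\tau_w(x)=(w_0,x_0,x_1,\dots)$. $A$ is Hölder with involution kernel $W(w,x)$ and dual potential $A^*$: $A^*(w)=A(\tau_wx)+W(\sigma w,\tau_wx)-W(w,x)$; normalize $m(A)=m(A^* )=0$. $V,V^*$ are calibrated subactions for $A,A^*$; $R^*(w)=V^*(\sigma w)-V^*(w)-A^*(w)\ge0$, $I^*(w)=\sum_{n\ge0}R^*(\sigma^nw)$. It is known that, after adding a constant to $W$, $V(x)=\sup_w[W(w,x)-V^*(w)-I^*(w)]$; $b(x,w)=V(x)+V^*(w)+I^*(w)-W(w,x)\ge 0$ and $(x,w)$ is optimal iff $b(x,w)=0$. Assume the maximizing probability of $A^*$ is unique and supported on a periodic orbit $M$; $P=\{w\notin M:\sigma w\in M\}$; $A$ is good if $R^*>0$ on $P$. *)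

(* Defs.v *)
From Stdlib Require Import Reals List.
Import ListNotations.
Open Scope R_scope.

Definition Sigma := nat -> bool.

(** The shift (called T when acting on x and sigma when acting on w). *)
Definition shift (x : Sigma) : Sigma := fun n => x (S n).
Definition shiftn (k : nat) (x : Sigma) : Sigma := Nat.iter k shift x.

Definition tau (w x : Sigma) : Sigma :=
  fun n => match n with O => w O | S m => x m end.

(** x and y agree on the first n coordinates (i.e. d(x,y) <= 2^-n). *)
Definition agree (n : nat) (x y : Sigma) : Prop :=
  forall i, (i < n)%nat -> x i = y i.

Definition continuous_S (f : Sigma -> R) : Prop :=
  forall x eps, 0 < eps -> exists n, forall y, agree n x y -> Rabs (f x - f y) < eps.

(** Hölder continuity w.r.t. the usual metric d(x,y) = theta^{min{i : x_i <> y_i}}. *)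
Definition holder (f : Sigma -> R) : Prop :=
  exists C theta, 0 < theta < 1 /\
    forall n x y, agree n x y -> Rabs (f x - f y) <= C * theta ^ n.

Definition holder2 (W : Sigma -> Sigma -> R) : Prop :=
  exists C theta, 0 < theta < 1 /\
    forall n m w w' x x', agree n w w' -> agree m x x' ->
      Rabs (W w x - W w' x') <= C * (theta ^ n + theta ^ m).

(** Borel probability measures on Sigma, given by their values on cylinders
    [u] = {x : x_0..x_{|u|-1} = u} (Kolmogorov / Caratheodory). *)
Definition is_prob (mu : list bool -> R) : Prop :=
  mu [] = 1 /\ (forall u, 0 <= mu u) /\
  (forall u, mu u = mu (u ++ [false]) + mu (u ++ [true])).

(** shift invariance: mu(T^{-1}[u]) = mu([u]) *)
Definition is_invariant (mu : list bool -> R) : Prop :=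
  is_prob mu /\ forall u, mu u = mu (false :: u) + mu (true :: u).

Fixpoint words (n : nat) : list (list bool) :=
  match n with
  | O => [[]]
  | S k => flat_map (fun u => [u ++ [false]; u ++ [true]]) (words k)
  end.

Definition ext (u : list bool) : Sigma := fun i => nth i u false.

Definition riemann_sum (mu : list bool -> R) (f : Sigma -> R) (n : nat) : R :=
  fold_right Rplus 0 (map (fun u => mu u * f (ext u)) (words n)).

Definition integral (mu : list bool -> R) (f : Sigma -> R) (l : R) : Prop :=
  Un_cv (riemann_sum mu f) l.

(** Normalization m(f) = 0, where m(f) = max over invariant probabilities of the integral. *)
Definition m_zero (f : Sigma -> R) : Prop :=
  (forall mu l, is_invariant mu -> integral mu f l -> l <= 0) /\
  (exists mu, is_invariant mu /\ integral mu f 0).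

Definition maximizing (f : Sigma -> R) (mu : list bool -> R) : Prop :=
  is_invariant mu /\ integral mu f 0.

Definition prefix (n : nat) (x : Sigma) : list bool := map x (seq 0 n).

Definition supp (mu : list bool -> R) (x : Sigma) : Prop :=
  forall n, 0 < mu (prefix n x).

(** calibrated subaction (with m(f)=0): V(z) = max_{shift y = z} (f y + V y) *)
Definition calibrated (f V : Sigma -> R) : Prop :=
  continuous_S V /\
  (forall y, V (shift y) >= V y + f y) /\
  (forall z, exists y, shift y = z /\ V z = V y + f y).

Definition involution_kernel (A Astar : Sigma -> R) (W : Sigma -> Sigma -> R) : Prop :=
  holder2 W /\
  forall w x, Astar w = A (tau w x) + W (shift w) (tau w x) - W w x.

Definition Rstar (Astar Vstar : Sigma -> R) (w : Sigma) : R :=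
  Vstar (shift w) - Vstar w - Astar w.

Definition Istar_is (Astar Vstar : Sigma -> R) (w : Sigma) (s : R) : Prop :=
  infinite_sum (fun n => Rstar Astar Vstar (shiftn n w)) s.

(** b(x,w) = V(x)+V*(w)+I*(w)-W(w,x) = 0 (so in particular I*(w) < infinity) *)
Definition optimal_pair (Astar V Vstar : Sigma -> R) (W : Sigma -> Sigma -> R)
    (x w : Sigma) : Prop :=
  exists s, Istar_is Astar Vstar w s /\ V x + Vstar w + s - W w x = 0.

(** The normalization of W: V(x) = sup_w [W(w,x) - V*(w) - I*(w)] *)
Definition V_sup_formula (Astar V Vstar : Sigma -> R) (W : Sigma -> Sigma -> R) : Prop :=
  forall x, is_lub (fun r => exists w s, Istar_is Astar Vstar w s /\
                                         r = W w x - Vstar w - s) (V x).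

Definition hatTinv (p : Sigma * Sigma) : Sigma * Sigma :=
  (tau (snd p) (fst p), shift (snd p)).
Definition hatTinvn (k : nat) (p : Sigma * Sigma) : Sigma * Sigma := Nat.iter k hatTinv p.

(* Main.v *)
Require Import Defs.
From Stdlib Require Import Arith Reals List Lra Lia Classical ClassicalEpsilon FunctionalExtensionality.
From Stdlib Require Rtopology.
Import ListNotations.
Open Scope R_scope.


Lemma shiftn_ap : forall k y m, shiftn k y m = y (k + m)%nat.
Proof.
  induction k; intros y m; simpl; [reflexivity|].
  unfold shift. change (Nat.iter k shift y) with (shiftn k y).
  rewrite IHk. f_equal. lia.
Qed.

Lemma shiftn_shift : forall n w, shiftn n (shift w) = shiftn (S n) w.
Proof.
  intros n w; apply functional_extensionality; intro m.
  rewrite !shiftn_ap. unfold shift. f_equal; lia.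
Qed.

Lemma shiftn_add : forall n N w, shiftn n (shiftn N w) = shiftn (n + N) w.
Proof.
  intros n N w; apply functional_extensionality; intro m.
  rewrite !shiftn_ap. f_equal; lia.
Qed.

Lemma sum_shift1 : forall f n, sum_f_R0 (fun k => f (S k)) n = sum_f_R0 f (S n) - f O.
Proof.
  intros f n; induction n; simpl; [lra|].
  rewrite IHn. simpl. lra.
Qed.

Lemma inf_sum_tail1 : forall f s, infinite_sum f s -> infinite_sum (fun n => f (S n)) (s - f O).
Proof.
  intros f s H eps Heps. destruct (H eps Heps) as [N HN].
  exists N. intros n Hn. rewrite sum_shift1. unfold R_dist in *.
  replace (sum_f_R0 f (S n) - f 0%nat - (s - f 0%nat)) with (sum_f_R0 f (S n) - s) by ring.
  apply HN. lia.
Qed.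

Lemma Istar_shift : forall As Vs w s, Istar_is As Vs w s ->
  Istar_is As Vs (shift w) (s - Rstar As Vs w).
Proof.
  intros As Vs w s H. unfold Istar_is in *.
  assert (E : (fun n => Rstar As Vs (shiftn n (shift w))) = (fun n => Rstar As Vs (shiftn (S n) w))).
  { apply functional_extensionality; intro n; rewrite shiftn_shift; reflexivity. }
  rewrite E. apply (inf_sum_tail1 (fun n => Rstar As Vs (shiftn n w))) in H. exact H.
Qed.

Lemma step_opt (A Astar V Vstar : Sigma -> R) (W : Sigma -> Sigma -> R)
  (HW : involution_kernel A Astar W) (HV : calibrated A V)
  (HWnorm : V_sup_formula Astar V Vstar W) x w :
  optimal_pair Astar V Vstar W x w -> optimal_pair Astar V Vstar W (tau w x) (shift w).
Proof.
  intros [s [Hs Hb]]. exists (s - Rstar Astar Vstar w). split.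
  - apply Istar_shift; exact Hs.
  - destruct HW as [_ HW]. specialize (HW w x).
    destruct HV as [_ [HV _]]. specialize (HV (tau w x)).
    change (shift (tau w x)) with x in HV.
    destruct (HWnorm (tau w x)) as [Hub _].
    assert (H1 : W (shift w) (tau w x) - Vstar (shift w) - (s - Rstar Astar Vstar w) <= V (tau w x)).
    { apply Hub. exists (shift w), (s - Rstar Astar Vstar w). split; [apply Istar_shift; exact Hs|reflexivity]. }
    unfold Rstar in *. lra.
Qed.

Lemma part2 (A Astar V Vstar : Sigma -> R) (W : Sigma -> Sigma -> R)
  (HW : involution_kernel A Astar W) (HV : calibrated A V)
  (HWnorm : V_sup_formula Astar V Vstar W) x w :
  optimal_pair Astar V Vstar W x w -> forall k,
  optimal_pair Astar V Vstar W (fst (hatTinvn k (x, w))) (snd (hatTinvn k (x, w))).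
Proof.
  intros H k; induction k; simpl; [exact H|].
  change (Nat.iter k hatTinv (x, w)) with (hatTinvn k (x, w)).
  unfold hatTinv. simpl. eapply step_opt; eassumption.
Qed.


Fixpoint prefb (u : list bool) (y : Sigma) : bool :=
  match u with [] => true | b :: u' => andb (Bool.eqb b (y O)) (prefb u' (shift y)) end.
Definition cind (u : list bool) (y : Sigma) : R := if prefb u y then 1 else 0.
Fixpoint ssum (f : nat -> R) (n : nat) : R :=
  match n with O => 0 | S m => ssum f m + f m end.
Definition lsum {X} (g : X -> R) (l : list X) : R := fold_right Rplus 0 (map g l).

Lemma prefb_app : forall u b y, prefb (u ++ [b]) y = andb (prefb u y) (Bool.eqb b (y (length u))).
Proof.
  induction u; intros b y; simpl.
  - destruct (Bool.eqb b (y O)); reflexivity.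
  - rewrite IHu. unfold shift. rewrite Bool.andb_assoc. reflexivity.
Qed.

Lemma cind_app : forall u b y, cind (u ++ [b]) y = cind u y * (if Bool.eqb b (y (length u)) then 1 else 0).
Proof.
  intros; unfold cind; rewrite prefb_app.
  destruct (prefb u y); destruct (Bool.eqb b (y (length u))); simpl; ring.
Qed.

Lemma cind_split : forall u y, cind u y = cind (u ++ [false]) y + cind (u ++ [true]) y.
Proof.
  intros; rewrite !cind_app. destruct (y (length u)); simpl; ring.
Qed.

Lemma cind_cons : forall u y, cind (false :: u) y + cind (true :: u) y = cind u (shift y).
Proof.
  intros; unfold cind; simpl. destruct (y O); simpl; destruct (prefb u (shift y)); ring.
Qed.

Lemma cind_bounds : forall u y, 0 <= cind u y <= 1.
Proof. intros; unfold cind; destruct (prefb u y); lra. Qed.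

Lemma cind_nil : forall y, cind [] y = 1.
Proof. reflexivity. Qed.

Lemma lsum_app {X} (g : X -> R) l1 l2 : lsum g (l1 ++ l2) = lsum g l1 + lsum g l2.
Proof. induction l1; simpl; unfold lsum in *; simpl; [ring|]. rewrite IHl1; ring. Qed.

Lemma lsum_flat_map {X Y} (g : Y -> R) (h : X -> list Y) l :
  lsum g (flat_map h l) = lsum (fun x => lsum g (h x)) l.
Proof.
  induction l; [reflexivity|]. simpl. rewrite lsum_app, IHl. reflexivity.
Qed.

Lemma lsum_ext_in {X} (g g' : X -> R) l : (forall x, In x l -> g x = g' x) -> lsum g l = lsum g' l.
Proof.
  induction l; intros H; [reflexivity|]. unfold lsum; simpl. rewrite (H a (or_introl eq_refl)).
  f_equal. apply IHl. intros; apply H; right; assumption.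
Qed.

Lemma lsum_plus {X} (g g' : X -> R) l : lsum (fun x => g x + g' x) l = lsum g l + lsum g' l.
Proof. induction l; unfold lsum in *; simpl; [ring|]. rewrite IHl; ring. Qed.

Lemma lsum_scal {X} c (g : X -> R) l : lsum (fun x => c * g x) l = c * lsum g l.
Proof. induction l; unfold lsum in *; simpl; [ring|]. rewrite IHl; ring. Qed.

Lemma lsum_le {X} (g g' : X -> R) l : (forall x, In x l -> g x <= g' x) -> lsum g l <= lsum g' l.
Proof.
  induction l; intros H; unfold lsum in *; simpl; [lra|].
  apply Rplus_le_compat; [apply H; left; reflexivity| apply IHl; intros; apply H; right; auto].
Qed.

Lemma lsum_abs {X} (g : X -> R) l : Rabs (lsum g l) <= lsum (fun x => Rabs (g x)) l.
Proof.
  induction l; unfold lsum in *; simpl; [rewrite Rabs_R0; lra|].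
  eapply Rle_trans; [apply Rabs_triang|]. lra.
Qed.

Lemma words_S n : words (S n) = flat_map (fun u => [u ++ [false]; u ++ [true]]) (words n).
Proof. reflexivity. Qed.

Lemma words_length : forall n u, In u (words n) -> length u = n.
Proof.
  induction n; intros u H.
  - simpl in H. destruct H as [<-|[]]. reflexivity.
  - rewrite words_S in H. apply in_flat_map in H. destruct H as [v [Hv Hu]].
    simpl in Hu. destruct Hu as [<-|[<-|[]]]; rewrite length_app; simpl;
    rewrite (IHn v Hv); lia.
Qed.

Lemma prefix_S : forall n y, prefix (S n) y = prefix n y ++ [y n].
Proof.
  intros; unfold prefix. rewrite seq_S, map_app. reflexivity.
Qed.

Lemma prefix_length : forall n y, length (prefix n y) = n.
Proof. intros; unfold prefix; rewrite length_map, length_seq; reflexivity. Qed.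

Lemma lsum_words_ind : forall n y g,
  lsum (fun u => cind u y * g u) (words n) = g (prefix n y).
Proof.
  induction n; intros y g.
  - unfold lsum, cind, prefix; simpl. ring.
  - rewrite words_S, lsum_flat_map.
    rewrite (lsum_ext_in _ (fun u => cind u y *
       ((if Bool.eqb false (y n) then 1 else 0) * g (u ++ [false]) +
        (if Bool.eqb true (y n) then 1 else 0) * g (u ++ [true])))).
    + rewrite IHn, prefix_S. destruct (y n); simpl; ring.
    + intros u Hu. unfold lsum; simpl. rewrite !cind_app. rewrite (words_length n u Hu). destruct (y n); simpl; ring.
Qed.

Lemma sum_words_prob : forall mu, is_prob mu -> forall n, lsum mu (words n) = 1.
Proof.
  intros mu [H0 [_ H1]] n. induction n.
  - unfold lsum; simpl. rewrite H0; ring.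
  - rewrite words_S, lsum_flat_map. rewrite <- IHn. apply lsum_ext_in.
    intros u _. unfold lsum; simpl. rewrite (H1 u). ring.
Qed.

Lemma ext_prefix_agree : forall n y, agree n (ext (prefix n y)) y.
Proof.
  intros n y i Hi. unfold ext, prefix.
  rewrite (nth_indep _ false (y O)) by (rewrite length_map, length_seq; lia).
  rewrite map_nth, seq_nth by lia. reflexivity.
Qed.

Lemma ssum_plus f g n : ssum (fun k => f k + g k) n = ssum f n + ssum g n.
Proof. induction n; simpl; [ring|]. rewrite IHn; ring. Qed.
Lemma ssum_scal c f n : ssum (fun k => c * f k) n = c * ssum f n.
Proof. induction n; simpl; [ring|]. rewrite IHn; ring. Qed.
Lemma ssum_shift1 f n : ssum (fun k => f (S k)) n = ssum f n + f n - f O.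
Proof. induction n; simpl; [ring|]. rewrite IHn; ring. Qed.
Lemma ssum_const c n : ssum (fun _ => c) n = c * INR n.
Proof. induction n; simpl ssum; [simpl; ring|]. rewrite IHn, S_INR; ring. Qed.
Lemma ssum_le f g n : (forall k, (k < n)%nat -> f k <= g k) -> ssum f n <= ssum g n.
Proof.
  induction n; intros H; simpl; [lra|]. apply Rplus_le_compat; [apply IHn; intros; apply H; lia| apply H; lia].
Qed.
Lemma lsum_ssum {X} (F : X -> nat -> R) l N :
  lsum (fun u => ssum (F u) N) l = ssum (fun k => lsum (fun u => F u k) l) N.
Proof.
  induction l; unfold lsum in *; simpl.
  - induction N; simpl; [reflexivity|]. rewrite <- IHN; ring.
  - rewrite IHl. rewrite <- ssum_plus. reflexivity.
Qed.
Lemma ssum_ext_eq f g n : (forall k, f k = g k) -> ssum f n = ssum g n.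
Proof. intros H; induction n; simpl; [reflexivity|]. rewrite IHn, H; reflexivity. Qed.


Lemma cluster (a : nat -> R) : (forall n, 0 <= a n <= 1) ->
  exists l, forall eps, 0 < eps -> forall N, exists p, (N <= p)%nat /\ Rabs (a p - l) < eps.
Proof.
  intros H. destruct (Rtopology.Bolzano_Weierstrass a (fun c => 0 <= c <= 1) (Rtopology.compact_P3 0 1) H) as [l Hl].
  exists l. intros eps Heps N.
  destruct (Hl (fun y => Rabs (y - l) < eps) N) as [p [Hp Hv]].
  - exists (mkposreal eps Heps). intros y Hy. unfold Rtopology.disc in Hy. exact Hy.
  - exists p; split; assumption.
Qed.

Definition incr (f : nat -> nat) := forall j, (f j < f (S j))%nat.

Lemma incr_lt f : incr f -> forall i j, (i < j)%nat -> (f i < f j)%nat.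
Proof.
  intros H i j Hij. induction Hij; [apply H|]. specialize (H m). lia.
Qed.

Lemma incr_ge f : incr f -> forall j, (j <= f j)%nat.
Proof. intros H j; induction j; [lia|]. specialize (H j); lia. Qed.

Lemma refine1 (b : nat -> R) : (forall n, 0 <= b n <= 1) ->
  exists chi, incr chi /\ exists l, Un_cv (fun j => b (chi j)) l.
Proof.
  intros Hb. destruct (cluster b Hb) as [l Hl].
  assert (H : forall k N, exists p, (N <= p)%nat /\ Rabs (b p - l) < / INR (S k)).
  { intros k N. apply Hl. apply Rinv_0_lt_compat. apply lt_0_INR; lia. }
  set (pick := fun k N => proj1_sig (constructive_indefinite_description _ (H k N))).
  assert (Hpick : forall k N, (N <= pick k N)%nat /\ Rabs (b (pick k N) - l) < / INR (S k)).
  { intros k N. unfold pick. destruct (constructive_indefinite_description _ (H k N)); simpl; assumption. }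
  set (chi := fix chi j := match j with O => pick O O | S j' => pick (S j') (S (chi j')) end).
  exists chi. split.
  - intro j. simpl. destruct (Hpick (S j) (S (chi j))); lia.
  - exists l. intros eps Heps.
    destruct (archimed_cor1 eps Heps) as [k [Hk Hk0]].
    exists k. intros j Hj. unfold R_dist.
    assert (Hc : Rabs (b (chi j) - l) < / INR (S j)).
    { destruct j; simpl; apply Hpick. }
    eapply Rlt_le_trans; [exact Hc|].
    assert (0 < INR k) by (apply lt_0_INR; lia).
    assert (INR k <= INR (S j)) by (apply le_INR; lia).
    apply Rle_trans with (/ INR k); [apply Rinv_le_contravar; lra| lra].
Qed.

Lemma diag (a : nat -> nat -> R) : (forall N c, 0 <= a N c <= 1) ->
  exists phi : nat -> nat, (forall j, (j <= phi j)%nat) /\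
    forall c, exists l, Un_cv (fun j => a (phi j) c) l.
Proof.
  intros Ha.
  assert (H : forall (psi : nat -> nat) (c : nat), exists chi, incr chi /\
     exists l, Un_cv (fun j => a (psi (chi j)) c) l).
  { intros psi c. apply (refine1 (fun n => a (psi n) c)). intros; apply Ha. }
  set (rf := fun psi c => proj1_sig (constructive_indefinite_description _ (H psi c))).
  assert (Hrf : forall psi c, incr (rf psi c) /\ exists l, Un_cv (fun j => a (psi (rf psi c j)) c) l).
  { intros psi c. unfold rf. destruct (constructive_indefinite_description _ (H psi c)); simpl; assumption. }
  set (stg := fix stg c := match c with O => fun j : nat => j | S c' => fun j => stg c' (rf (stg c') c' j) end).
  assert (Hstg : forall c, incr (stg c)).
  { induction c; intro j; simpl; [lia|].
    apply (incr_lt _ IHc). apply (proj1 (Hrf (stg c) c)). }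
  exists (fun j => stg (S j) j). split.
  - intro j. apply incr_ge, Hstg.
  - intro c. destruct (proj2 (Hrf (stg c) c)) as [l Hl]. exists l.
    assert (Hd : forall d i, exists m, (i <= m)%nat /\ stg (S c + d)%nat i = stg (S c) m).
    { induction d; intro i.
      - exists i; split; [lia| f_equal; lia].
      - replace (S c + S d)%nat with (S (S c + d)) by lia.
        change (stg (S (S c + d)) i) with (stg (S c + d)%nat (rf (stg (S c + d)%nat) (S c + d)%nat i)).
        destruct (IHd (rf (stg (S c + d)%nat) (S c + d)%nat i)) as [m [Hm Hm']].
        exists m; split; [|exact Hm'].
        pose proof (incr_ge _ (proj1 (Hrf (stg (S c + d)%nat) (S c + d)%nat)) i). lia. }
    intros eps Heps. destruct (Hl eps Heps) as [N HN]. exists (N + S c)%nat.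
    intros j Hj. destruct (Hd (j - c)%nat j) as [m [Hm Hm']].
    replace (S c + (j - c))%nat with (S j) in Hm' by lia.
    rewrite Hm'. simpl. apply HN. lia.
Qed.


Fixpoint enc (u : list bool) : nat :=
  match u with [] => O | b :: u' => S ((if b then 1 else 0) + 2 * enc u')%nat end.
Fixpoint decf (f c : nat) : list bool :=
  match f with O => [] | S f' => match c with O => [] | S c' => Nat.odd c' :: decf f' (Nat.div2 c') end end.
Definition dec (c : nat) := decf c c.

Lemma decf_enc : forall u f, (enc u <= f)%nat -> decf f (enc u) = u.
Proof.
  induction u as [|b u IH]; intros f Hf.
  - destruct f; reflexivity.
  - destruct f as [|f]; [simpl in Hf; lia|]. cbn [enc decf].
    rewrite Nat.odd_add_mul_2. f_equal.
    + destruct b; reflexivity.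
    + destruct b; simpl ((if true then 1 else 0)%nat); simpl ((if false then 1 else 0)%nat).
      * replace (1 + 2 * enc u)%nat with (S (2 * enc u)) by lia. rewrite Nat.div2_succ_double.
        apply IH. simpl in Hf; lia.
      * rewrite Nat.add_0_l, Nat.div2_double. apply IH. simpl in Hf; lia.
Qed.

Lemma dec_enc u : dec (enc u) = u.
Proof. apply decf_enc; lia. Qed.

Definition emp (w : Sigma) (N : nat) (u : list bool) : R :=
  ssum (fun k => cind u (shiftn k w)) N / INR N.

Lemma ssum_bounds u w N : 0 <= ssum (fun k => cind u (shiftn k w)) N <= INR N.
Proof.
  induction N; simpl ssum; [simpl; lra|]. rewrite S_INR. pose proof (cind_bounds u (shiftn N w)). lra.
Qed.

Lemma emp_bounds w N u : 0 <= emp w (S N) u <= 1.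
Proof.
  unfold emp. pose proof (ssum_bounds u w (S N)). assert (0 < INR (S N)) by (apply lt_0_INR; lia).
  split.
  - apply Rmult_le_pos; [lra| left; apply Rinv_0_lt_compat; lra].
  - apply (Rmult_le_reg_r (INR (S N))); [lra|]. unfold Rdiv. rewrite Rmult_assoc, Rinv_l by lra. lra.
Qed.

Lemma emp_nil w N : emp w (S N) [] = 1.
Proof.
  unfold emp. assert (0 < INR (S N)) by (apply lt_0_INR; lia).
  change (ssum (fun k => cind [] (shiftn k w)) (S N)) with (ssum (fun _ => 1) (S N)).
  rewrite ssum_const. field. lra.
Qed.

Lemma emp_split w N u : emp w N u = emp w N (u ++ [false]) + emp w N (u ++ [true]).
Proof.
  unfold emp, Rdiv. rewrite <- Rmult_plus_distr_r, <- ssum_plus. f_equal.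
  induction N; simpl; [reflexivity|]. rewrite IHN, <- cind_split. reflexivity.
Qed.

Lemma emp_inv w N u : emp w N (false :: u) + emp w N (true :: u) - emp w N u =
  (cind u (shiftn N w) - cind u w) / INR N.
Proof.
  unfold emp, Rdiv. rewrite <- Rmult_plus_distr_r, <- ssum_plus.
  rewrite (ssum_ext_eq (fun k => cind (false :: u) (shiftn k w) + cind (true :: u) (shiftn k w))
     (fun k => cind u (shiftn (S k) w))).
  - rewrite (ssum_shift1 (fun k => cind u (shiftn k w))). simpl. ring.
  - intro k. rewrite cind_cons. reflexivity.
Qed.

Lemma abs_le_split x c : Rabs x <= c -> -c <= x <= c.
Proof. unfold Rabs; destruct (Rcase_abs x); lra. Qed.

Lemma cv_ext a b l : (forall j, a j = b j) -> Un_cv a l -> Un_cv b l.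
Proof. intros H Ha eps He. destruct (Ha eps He) as [N HN]. exists N; intros n Hn; rewrite <- H; auto. Qed.

Lemma cv_const c : Un_cv (fun _ => c) c.
Proof. intros eps He; exists O; intros; unfold R_dist; rewrite Rminus_diag, Rabs_R0; lra. Qed.

Lemma lim_ge a l c : Un_cv a l -> (forall j, c <= a j) -> c <= l.
Proof.
  intros Ha H. destruct (Rle_lt_dec c l) as [|Hlt]; [assumption|].
  destruct (Ha (c - l)) as [N HN]; [lra|]. specialize (HN N (le_n N)). specialize (H N).
  unfold R_dist in HN. apply Rabs_def2 in HN. lra.
Qed.

Lemma squeeze0 a b : Un_cv b 0 -> (forall j, Rabs (a j) <= b j) -> Un_cv a 0.
Proof.
  intros Hb H eps He. destruct (Hb eps He) as [N HN]. exists N. intros n Hn.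
  specialize (HN n Hn). unfold R_dist in *. rewrite Rminus_0_r in *.
  eapply Rle_lt_trans; [apply H|]. apply Rabs_def2 in HN. lra.
Qed.

Lemma inv_cv (phi : nat -> nat) : (forall j, (j <= phi j)%nat) -> Un_cv (fun j => / INR (S (phi j))) 0.
Proof.
  intros Hphi eps He. destruct (archimed_cor1 eps He) as [N [HN HN0]]. exists N. intros j Hj.
  unfold R_dist. rewrite Rminus_0_r.
  assert (0 < INR N) by (apply lt_0_INR; lia).
  assert (INR N <= INR (S (phi j))) by (apply le_INR; specialize (Hphi j); lia).
  assert (0 < / INR (S (phi j))) by (apply Rinv_0_lt_compat; lra).
  rewrite Rabs_right by lra. apply Rle_lt_trans with (/ INR N); [apply Rinv_le_contravar; lra| lra].
Qed.

Lemma cv_scal_inv (phi : nat -> nat) C : (forall j, (j <= phi j)%nat) -> Un_cv (fun j => C * / INR (S (phi j))) 0.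
Proof.
  intros Hphi. replace 0 with (C * 0) by ring. apply CV_mult; [apply cv_const| apply inv_cv; assumption].
Qed.

Lemma ssum_mult_r f c n : ssum f n * c = ssum (fun k => f k * c) n.
Proof. induction n; simpl; [ring|]. rewrite <- IHn; ring. Qed.

Lemma RS_emp w N f n : riemann_sum (emp w N) f n =
  ssum (fun k => f (ext (prefix n (shiftn k w)))) N / INR N.
Proof.
  unfold riemann_sum. change (fold_right Rplus 0 (map (fun u => emp w N u * f (ext u)) (words n)))
    with (lsum (fun u => emp w N u * f (ext u)) (words n)).
  unfold emp.
  rewrite (lsum_ext_in _ (fun u => / INR N * ssum (fun k => cind u (shiftn k w) * f (ext u)) N)).
  - rewrite lsum_scal, lsum_ssum. unfold Rdiv. rewrite Rmult_comm. f_equal.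
    apply ssum_ext_eq. intro k. apply lsum_words_ind.
  - intros u _. unfold Rdiv. rewrite <- ssum_mult_r. ring.
Qed.

Lemma lsum_cv (a : nat -> list bool -> R) (m : list bool -> R) g l :
  (forall u, Un_cv (fun j => a j u) (m u)) ->
  Un_cv (fun j => lsum (fun u => a j u * g u) l) (lsum (fun u => m u * g u) l).
Proof.
  intros H. induction l.
  - unfold lsum; simpl. apply cv_const.
  - unfold lsum in *; simpl. apply CV_plus; [|exact IHl]. apply CV_mult; [apply H| apply cv_const].
Qed.

Lemma ssum_le_n0 f n0 : (forall k, 0 <= f k <= 1) -> (forall k, (n0 <= k)%nat -> f k = 0) ->
  forall N, ssum f N <= INR n0.
Proof.
  intros Hb Hz N. induction N; simpl ssum.
  - apply pos_INR.
  - destruct (le_lt_dec n0 N).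
    + rewrite Hz by assumption. lra.
    + assert (ssum f N <= INR N).
      { clear IHN l. induction N; simpl ssum; [simpl; lra|]. rewrite S_INR. specialize (Hb N). lra. }
      assert (INR (S N) <= INR n0) by (apply le_INR; lia). rewrite S_INR in H0. specialize (Hb N). lra.
Qed.

Lemma ext_app_agree u b : agree (length u) (ext (u ++ [b])) (ext u).
Proof. intros i Hi. unfold ext. apply app_nth1. exact Hi. Qed.

Definition modulus (f : Sigma -> R) E th := forall n y y', agree n y y' -> Rabs (f y - f y') <= E * th ^ n.

Lemma RS_step mu f E th : is_prob mu -> modulus f E th -> 0 <= E -> 0 < th ->
  forall n, Rabs (riemann_sum mu f (S n) - riemann_sum mu f n) <= E * th ^ n.
Proof.
  intros Hp Hm HE Hth n.
  pose proof Hp as [_ [Hpos Hsplit]].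
  set (D := fun u => mu (u ++ [false]) * (f (ext (u ++ [false])) - f (ext u)) +
                    mu (u ++ [true]) * (f (ext (u ++ [true])) - f (ext u))).
  assert (E1 : riemann_sum mu f (S n) = lsum (fun u => D u + mu u * f (ext u)) (words n)).
  { unfold riemann_sum. change (fold_right Rplus 0 (map (fun u => mu u * f (ext u)) (words (S n))))
      with (lsum (fun u => mu u * f (ext u)) (words (S n))).
    rewrite words_S, lsum_flat_map. apply lsum_ext_in. intros u _. unfold D, lsum; simpl.
    rewrite (Hsplit u). ring. }
  rewrite E1, lsum_plus.
  change (riemann_sum mu f n) with (lsum (fun u => mu u * f (ext u)) (words n)).
  replace (lsum D (words n) + lsum (fun u => mu u * f (ext u)) (words n) -
     lsum (fun u => mu u * f (ext u)) (words n)) with (lsum D (words n)) by ring.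
  eapply Rle_trans; [apply lsum_abs|].
  apply Rle_trans with (lsum (fun u => E * th ^ n * mu u) (words n)).
  - apply lsum_le. intros u Hu. unfold D. pose proof (words_length n u Hu) as Hl.
    eapply Rle_trans; [apply Rabs_triang|]. rewrite !Rabs_mult.
    rewrite (Rabs_right (mu (u ++ [false]))) by (apply Rle_ge, Hpos).
    rewrite (Rabs_right (mu (u ++ [true]))) by (apply Rle_ge, Hpos).
    pose proof (Hm n _ _ (eq_ind _ (fun k => agree k _ _) (ext_app_agree u false) _ Hl)) as H0.
    pose proof (Hm n _ _ (eq_ind _ (fun k => agree k _ _) (ext_app_agree u true) _ Hl)) as H1.
    rewrite (Hsplit u).
    pose proof (Hpos (u ++ [false])). pose proof (Hpos (u ++ [true])).
    assert (mu (u ++ [false]) * Rabs (f (ext (u ++ [false])) - f (ext u)) <= mu (u ++ [false]) * (E * th ^ n))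
      by (apply Rmult_le_compat_l; assumption).
    assert (mu (u ++ [true]) * Rabs (f (ext (u ++ [true])) - f (ext u)) <= mu (u ++ [true]) * (E * th ^ n))
      by (apply Rmult_le_compat_l; assumption).
    lra.
  - rewrite lsum_scal, (sum_words_prob mu Hp n). lra.
Qed.

Lemma f_bound f E th : modulus f E th -> forall y, Rabs (f y) <= Rabs (f (fun _ => false)) + E.
Proof.
  intros Hm y. assert (H : agree 0 y (fun _ => false)) by (intros i Hi; lia).
  specialize (Hm 0%nat _ _ H). simpl in Hm. rewrite Rmult_1_r in Hm.
  pose proof (Rabs_triang_inv (f y) (f (fun _ => false))). lra.
Qed.

Lemma RS_bound mu f E th : is_prob mu -> modulus f E th -> forall n,
  riemann_sum mu f n <= Rabs (f (fun _ => false)) + E.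
Proof.
  intros Hp Hm n. change (riemann_sum mu f n) with (lsum (fun u => mu u * f (ext u)) (words n)).
  apply Rle_trans with (lsum (fun u => (Rabs (f (fun _ => false)) + E) * mu u) (words n)).
  - apply lsum_le. intros u _. destruct Hp as [_ [Hpos _]]. specialize (Hpos u).
    pose proof (f_bound f E th Hm (ext u)). pose proof (Rle_abs (f (ext u))).
    rewrite (Rmult_comm (mu u)). apply Rmult_le_compat_r; lra.
  - rewrite lsum_scal, (sum_words_prob mu Hp n). lra.
Qed.

Lemma pow_cv0 th : 0 < th < 1 -> Un_cv (fun n => th ^ n) 0.
Proof.
  intros Hth eps He. destruct (pow_lt_1_zero th) with eps as [N HN]; [rewrite Rabs_right; lra| lra|].
  exists N. intros n Hn. unfold R_dist. rewrite Rminus_0_r. apply HN; lia.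
Qed.

Lemma RS_conv mu f E th : is_prob mu -> modulus f E th -> 0 <= E -> 0 < th < 1 ->
  (forall n, - (E * th ^ n) <= riemann_sum mu f n) ->
  exists l, integral mu f l /\ 0 <= l.
Proof.
  intros Hp Hm HE Hth Hlow.
  set (g := fun n => riemann_sum mu f n - E / (1 - th) * th ^ n).
  assert (Hg : Un_growing g).
  { intro n. unfold g. pose proof (RS_step mu f E th Hp Hm HE (proj1 Hth) n) as H.
    apply abs_le_split in H. simpl pow.
    assert (E / (1 - th) * th ^ n - E / (1 - th) * (th * th ^ n) = E * th ^ n) by (field; lra).
    lra. }
  assert (Hub : has_ub g).
  { exists (Rabs (f (fun _ => false)) + E). intros x [n ->]. unfold g.
    pose proof (RS_bound mu f E th Hp Hm n).
    assert (0 <= E / (1 - th) * th ^ n).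
    { apply Rmult_le_pos; [apply Rmult_le_pos; [lra| left; apply Rinv_0_lt_compat; lra]|].
      apply pow_le; lra. }
    lra. }
  destruct (growing_cv g Hg Hub) as [l Hl].
  assert (Hr : Un_cv (riemann_sum mu f) (l + E / (1 - th) * 0)).
  { apply (cv_ext (fun n => g n + E / (1 - th) * th ^ n)).
    - intro n; unfold g; ring.
    - apply CV_plus; [exact Hl|]. apply CV_mult; [apply cv_const| apply pow_cv0; exact Hth]. }
  rewrite Rmult_0_r, Rplus_0_r in Hr.
  exists l. split; [exact Hr|].
  assert (Hs : Un_cv (fun n => riemann_sum mu f n + E * th ^ n) (l + E * 0)).
  { apply CV_plus; [exact Hr|]. apply CV_mult; [apply cv_const| apply pow_cv0; exact Hth]. }
  rewrite Rmult_0_r, Rplus_0_r in Hs.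
  apply (lim_ge _ _ 0 Hs). intro n. specialize (Hlow n). lra.
Qed.

Lemma KB (f : Sigma -> R) (w : Sigma) (E th K0 : R) :
  0 < th < 1 -> 0 <= E -> modulus f E th ->
  (forall N, - K0 <= ssum (fun k => f (shiftn k w)) N) ->
  exists mu, is_invariant mu /\ (exists l, integral mu f l /\ 0 <= l) /\
    forall u, (exists n0, forall n, (n0 <= n)%nat -> cind u (shiftn n w) = 0) -> mu u = 0.
Proof.
  intros Hth HE Hm HK.
  destruct (diag (fun N c => emp w (S N) (dec c))) as [phi [Hphi Hlim]].
  { intros; apply emp_bounds. }
  set (Lim := fun c => proj1_sig (constructive_indefinite_description _ (Hlim c))).
  assert (HL : forall c, Un_cv (fun j => emp w (S (phi j)) (dec c)) (Lim c)).
  { intro c. unfold Lim. destruct (constructive_indefinite_description _ (Hlim c)); simpl; assumption. }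
  set (mu := fun u => Lim (enc u)).
  assert (Hcv : forall u, Un_cv (fun j => emp w (S (phi j)) u) (mu u)).
  { intro u. unfold mu. pose proof (HL (enc u)) as H. rewrite dec_enc in H. exact H. }
  assert (Hprob : is_prob mu).
  { split; [|split].
    - apply (UL_sequence (fun j => emp w (S (phi j)) [])); [apply Hcv|].
      apply (cv_ext (fun _ => 1)); [intro j; rewrite emp_nil; reflexivity| apply cv_const].
    - intro u. apply (lim_ge _ _ 0 (Hcv u)). intro j; apply emp_bounds.
    - intro u. apply (UL_sequence (fun j => emp w (S (phi j)) u)); [apply Hcv|].
      apply (cv_ext (fun j => emp w (S (phi j)) (u ++ [false]) + emp w (S (phi j)) (u ++ [true]))).
      + intro j; rewrite <- emp_split; reflexivity.
      + apply CV_plus; apply Hcv. }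
  exists mu. split; [|split].
  - split; [exact Hprob|]. intro u.
    assert (H1 : Un_cv (fun j => emp w (S (phi j)) (false :: u) + emp w (S (phi j)) (true :: u)
                    - emp w (S (phi j)) u) (mu (false :: u) + mu (true :: u) - mu u)).
    { apply CV_minus; [apply CV_plus|]; apply Hcv. }
    assert (H2 : Un_cv (fun j => emp w (S (phi j)) (false :: u) + emp w (S (phi j)) (true :: u)
                    - emp w (S (phi j)) u) 0).
    { apply (squeeze0 _ _ (cv_scal_inv phi 1 Hphi)). intro j. rewrite emp_inv.
      pose proof (cind_bounds u (shiftn (S (phi j)) w)). pose proof (cind_bounds u w).
      assert (0 < INR (S (phi j))) by (apply lt_0_INR; lia).
      unfold Rdiv. rewrite Rabs_mult, (Rabs_right (/ _)) by (left; apply Rinv_0_lt_compat; lra).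
      apply Rmult_le_compat_r; [left; apply Rinv_0_lt_compat; lra|].
      unfold Rabs; destruct Rcase_abs; lra. }
    pose proof (UL_sequence _ _ _ H1 H2). lra.
  - apply (RS_conv mu f E th Hprob Hm HE Hth). intro n.
    assert (Hc : Un_cv (fun j => riemann_sum (emp w (S (phi j))) f n + K0 * / INR (S (phi j)))
                   (riemann_sum mu f n + 0)).
    { apply CV_plus; [|apply cv_scal_inv; exact Hphi].
      unfold riemann_sum. apply (lsum_cv (fun j => emp w (S (phi j))) mu (fun u => f (ext u)) (words n) Hcv). }
    rewrite Rplus_0_r in Hc. apply (lim_ge _ _ _ Hc). intro j.
    rewrite RS_emp. set (N := S (phi j)).
    assert (HN : 0 < INR N) by (apply lt_0_INR; unfold N; lia).
    assert (Hs : ssum (fun k => f (shiftn k w)) N - INR N * (E * th ^ n) <=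
                 ssum (fun k => f (ext (prefix n (shiftn k w)))) N).
    { apply Rle_trans with (ssum (fun k => f (shiftn k w) + (-1) * (E * th ^ n)) N).
      { rewrite ssum_plus, ssum_scal, ssum_const. lra. }
      apply ssum_le. intros k _. specialize (Hm n _ _ (ext_prefix_agree n (shiftn k w))).
      apply abs_le_split in Hm. lra. }
    specialize (HK N).
    apply (Rmult_le_reg_r (INR N)); [exact HN|].
    unfold Rdiv. rewrite Rmult_plus_distr_r, Rmult_assoc, Rinv_l, (Rmult_assoc K0), Rinv_l by lra. lra.
  - intros u [n0 Hn0]. apply (UL_sequence (fun j => emp w (S (phi j)) u)); [apply Hcv|].
    apply (squeeze0 _ _ (cv_scal_inv phi (INR n0) Hphi)). intro j.
    unfold emp. assert (0 < INR (S (phi j))) by (apply lt_0_INR; lia).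
    pose proof (ssum_bounds u w (S (phi j))).
    pose proof (ssum_le_n0 (fun k => cind u (shiftn k w)) n0 (fun k => cind_bounds u (shiftn k w)) Hn0 (S (phi j))).
    unfold Rdiv. rewrite Rabs_mult, Rabs_right, (Rabs_right (/ _)) by (try (left; apply Rinv_0_lt_compat); lra).
    apply Rmult_le_compat_r; [left; apply Rinv_0_lt_compat; lra| exact H1].
Qed.


Lemma agree_mono n m x y : (m <= n)%nat -> agree n x y -> agree m x y.
Proof. intros Hmn H i Hi. apply H. lia. Qed.

Lemma prefb_prefix : forall L z y, prefb (prefix L z) y = true -> agree L z y.
Proof.
  induction L; intros z y H.
  - intros i Hi; lia.
  - rewrite prefix_S, prefb_app, prefix_length in H. apply andb_prop in H as [H1 H2].
    intros i Hi. destruct (Nat.eq_dec i L) as [->|].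
    + apply Bool.eqb_prop in H2. exact H2.
    + apply (IHL z y H1). lia.
Qed.

Lemma ssum_sum_f g N : ssum g (S N) = sum_f_R0 g N.
Proof. induction N; simpl; [ring|]. simpl in IHN. rewrite <- IHN. ring. Qed.

Lemma partial_le g s : (forall n, 0 <= g n) -> infinite_sum g s -> forall N, ssum g N <= s.
Proof.
  intros Hg Hs N.
  assert (Hgr : Un_growing (sum_f_R0 g)).
  { intro n. simpl. specialize (Hg (S n)). lra. }
  assert (H : forall n, sum_f_R0 g n <= s) by (intro n; apply (growing_ineq _ _ Hgr Hs)).
  destruct N.
  - simpl. specialize (H O). simpl in H. specialize (Hg O). lra.
  - rewrite ssum_sum_f. apply H.
Qed.

Lemma ssum_nonneg g N : (forall n, 0 <= g n) -> 0 <= ssum g N.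
Proof. intros Hg; induction N; simpl; [lra|]. specialize (Hg N); lra. Qed.

Lemma terms_small g s c : infinite_sum g s -> 0 < c -> exists N0, forall n, (N0 <= n)%nat -> g n < c.
Proof.
  intros Hs Hc. destruct (Hs (c / 2)) as [N HN]; [lra|].
  exists (S N). intros n Hn. destruct n as [|n]; [lia|].
  pose proof (HN n ltac:(lia)) as H1. pose proof (HN (S n) ltac:(lia)) as H2.
  unfold R_dist in *. simpl in H2. apply Rabs_def2 in H1. apply Rabs_def2 in H2. lra.
Qed.

Lemma Istar_shiftn As Vs w s : Istar_is As Vs w s -> forall N,
  Istar_is As Vs (shiftn N w) (s - ssum (fun k => Rstar As Vs (shiftn k w)) N).
Proof.
  intros H N. induction N.
  - simpl. rewrite Rminus_0_r. exact H.
  - simpl ssum. replace (s - (ssum (fun k => Rstar As Vs (shiftn k w)) N + Rstar As Vs (shiftn N w)))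
      with (s - ssum (fun k => Rstar As Vs (shiftn k w)) N - Rstar As Vs (shiftn N w)) by ring.
    apply (Istar_shift As Vs (shiftn N w)). exact IHN.
Qed.

Lemma telescope As Vs w N : ssum (fun k => As (shiftn k w)) N =
  Vs (shiftn N w) - Vs w - ssum (fun k => Rstar As Vs (shiftn k w)) N.
Proof.
  induction N; simpl ssum; [simpl; ring|]. rewrite IHN. unfold Rstar.
  change (shiftn (S N) w) with (shift (shiftn N w)). ring.
Qed.

Lemma transition (P : nat -> Prop) b : ~ P b -> forall d, P (b + d)%nat ->
  exists n, (b <= n)%nat /\ ~ P n /\ P (S n).
Proof.
  intros Hb d. induction d; intros Hd.
  - rewrite Nat.add_0_r in Hd. contradiction.
  - destruct (classic (P (b + d)%nat)) as [Hp|Hp].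
    + apply IHd, Hp.
    + exists (b + d)%nat. split; [lia|]. split; [exact Hp|]. replace (S (b + d)) with (b + S d)%nat by lia. exact Hd.
Qed.

Lemma abs3 a b c : Rabs (a + b - c) <= Rabs a + Rabs b + Rabs c.
Proof. unfold Rabs; repeat destruct Rcase_abs; lra. Qed.

Definition x0 : Sigma := fun _ => false.

Lemma Astar_modulus A Astar W : holder A -> involution_kernel A Astar W ->
  exists E th, 0 < th < 1 /\ 0 <= E /\ modulus Astar E th.
Proof.
  intros [CA [tA [HtA HA]]] [[CW [tW [HtW HWh]]] HW].
  assert (HCA : 0 <= CA).
  { specialize (HA O x0 x0 ltac:(intros i Hi; lia)). simpl in HA. rewrite Rminus_diag, Rabs_R0 in HA. lra. }
  assert (HCW : 0 <= CW).
  { specialize (HWh O O x0 x0 x0 x0 ltac:(intros i Hi; lia) ltac:(intros i Hi; lia)).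
    simpl in HWh. rewrite Rminus_diag, Rabs_R0 in HWh. lra. }
  set (th := Rmax tA tW).
  assert (Hth : 0 < th < 1) by (unfold th; unfold Rmax; destruct Rle_dec; lra).
  exists (CA + 4 * CW / th), th. split; [exact Hth|]. split.
  { apply Rplus_le_le_0_compat; [lra|]. unfold Rdiv. apply Rmult_le_pos; [lra| left; apply Rinv_0_lt_compat; lra]. }
  intros n y y' Hag.
  rewrite (HW y x0), (HW y' x0).
  assert (Ht : agree n (tau y x0) (tau y' x0)).
  { intros i Hi. destruct i; simpl; [apply Hag; exact Hi| reflexivity]. }
  assert (Hs : agree (pred n) (shift y) (shift y')).
  { intros i Hi. unfold shift. apply Hag. lia. }
  assert (H0 : agree n x0 x0) by (intros i Hi; reflexivity).
  pose proof (HA n _ _ Ht) as E1.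
  pose proof (HWh (pred n) n _ _ _ _ Hs Ht) as E2.
  pose proof (HWh n n _ _ _ _ Hag H0) as E3.
  assert (PA : tA ^ n <= th ^ n) by (apply pow_incr; unfold th; split; [lra| apply Rmax_l]).
  assert (PW : tW ^ n <= th ^ n) by (apply pow_incr; unfold th; split; [lra| apply Rmax_r]).
  assert (PWp : tW ^ pred n <= th ^ pred n) by (apply pow_incr; unfold th; split; [lra| apply Rmax_r]).
  assert (Hp : th ^ pred n <= th ^ n / th).
  { destruct n; simpl.
    - unfold Rdiv. rewrite Rmult_1_l. rewrite <- Rinv_1 at 1. apply Rinv_le_contravar; lra.
    - unfold Rdiv. rewrite (Rmult_comm th), Rmult_assoc, Rinv_r, Rmult_1_r by lra. lra. }
  assert (Hq : th ^ n <= th ^ n / th).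
  { unfold Rdiv. rewrite <- (Rmult_1_r (th ^ n)) at 1. apply Rmult_le_compat_l; [apply pow_le; lra|].
    rewrite <- Rinv_1. apply Rinv_le_contravar; lra. }
  assert (Htot : Rabs (A (tau y x0) + W (shift y) (tau y x0) - W y x0 -
     (A (tau y' x0) + W (shift y') (tau y' x0) - W y' x0)) <=
     Rabs (A (tau y x0) - A (tau y' x0)) + Rabs (W (shift y) (tau y x0) - W (shift y') (tau y' x0))
     + Rabs (W y x0 - W y' x0)).
  { replace (A (tau y x0) + W (shift y) (tau y x0) - W y x0 -
     (A (tau y' x0) + W (shift y') (tau y' x0) - W y' x0)) with
     ((A (tau y x0) - A (tau y' x0)) + (W (shift y) (tau y x0) - W (shift y') (tau y' x0))
      - (W y x0 - W y' x0)) by ring.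
    apply abs3. }
  eapply Rle_trans; [exact Htot|].
  assert (0 <= th ^ n) by (apply pow_le; lra).
  assert (CA * tA ^ n <= CA * th ^ n) by (apply Rmult_le_compat_l; lra).
  assert (CW * (tW ^ pred n + tW ^ n) <= CW * (th ^ n / th + th ^ n / th)) by (apply Rmult_le_compat_l; lra).
  assert (CW * (tW ^ n + tW ^ n) <= CW * (th ^ n / th + th ^ n / th)) by (apply Rmult_le_compat_l; lra).
  replace ((CA + 4 * CW / th) * th ^ n) with (CA * th ^ n + 2 * (CW * (th ^ n / th + th ^ n / th)))
    by (field; lra).
  lra.
Qed.

Lemma W_bounded W : holder2 W -> exists CW, forall a b a' b', W a' b' - CW <= W a b.
Proof.
  intros [C [t [Ht H]]]. exists (C * (1 + 1)). intros a b a' b'.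
  specialize (H O O a' a b' b ltac:(intros i Hi; lia) ltac:(intros i Hi; lia)). simpl in H.
  apply abs_le_split in H. lra.
Qed.

Lemma Rstar_cont As Vs E th : continuous_S Vs -> modulus As E th -> 0 < th < 1 -> 0 <= E ->
  forall z eps, 0 < eps -> exists L, forall y, agree L z y -> Rabs (Rstar As Vs z - Rstar As Vs y) < eps.
Proof.
  intros HV Hm Hth HE z eps He.
  destruct (HV (shift z) (eps / 3)) as [n1 H1]; [lra|].
  destruct (HV z (eps / 3)) as [n2 H2]; [lra|].
  destruct (pow_lt_1_zero th) with (eps / 3 / (E + 1)) as [n3 H3].
  { rewrite Rabs_right; lra. }
  { unfold Rdiv. apply Rmult_lt_0_compat; [lra| apply Rinv_0_lt_compat; lra]. }
  exists (Nat.max (S n1) (Nat.max n2 n3)). intros y Hy.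
  assert (A1 : Rabs (Vs (shift z) - Vs (shift y)) < eps / 3).
  { apply H1. intros i Hi. unfold shift. apply Hy. lia. }
  assert (A2 : Rabs (Vs z - Vs y) < eps / 3) by (apply H2; eapply agree_mono; [|exact Hy]; lia).
  assert (A3 : Rabs (As z - As y) < eps / 3).
  { eapply Rle_lt_trans; [apply (Hm (Nat.max (S n1) (Nat.max n2 n3))); exact Hy|].
    specialize (H3 (Nat.max (S n1) (Nat.max n2 n3)) ltac:(lia)).
    rewrite Rabs_right in H3 by (apply Rle_ge, pow_le; lra).
    set (q := th ^ Nat.max (S n1) (Nat.max n2 n3)) in *.
    assert (0 <= q) by (apply pow_le; lra).
    apply Rmult_lt_compat_l with (r := E + 1) in H3; [|lra].
    replace ((E + 1) * (eps / 3 / (E + 1))) with (eps / 3) in H3 by (field; lra).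
    assert (E * q <= (E + 1) * q) by (apply Rmult_le_compat_r; lra). lra. }
  unfold Rstar.
  replace (Vs (shift z) - Vs z - As z - (Vs (shift y) - Vs y - As y)) with
    ((Vs (shift z) - Vs (shift y)) - (Vs z - Vs y) - (As z - As y)) by ring.
  assert (Habs : forall a b c, Rabs (a - b - c) <= Rabs a + Rabs b + Rabs c)
    by (intros; unfold Rabs; repeat destruct Rcase_abs; lra).
  eapply Rle_lt_trans; [apply Habs|]. lra.
Qed.

Lemma pos_near (g : Sigma -> R) z : (forall eps, 0 < eps -> exists L, forall y, agree L z y -> Rabs (g z - g y) < eps) ->
  g z > 0 -> exists L c, 0 < c /\ forall y, agree L z y -> c <= g y.
Proof.
  intros Hc Hz. destruct (Hc (g z / 2)) as [L HL]; [lra|]. exists L, (g z / 2). split; [lra|].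
  intros y Hy. specialize (HL y Hy). apply Rabs_def2 in HL. lra.
Qed.

Lemma unif (g : Sigma -> R) (P : Sigma -> Prop) (F : nat -> bool -> Sigma) NN :
  (forall i b, P (F i b) -> exists L c, 0 < c /\ forall y, agree L (F i b) y -> c <= g y) ->
  forall K, exists L c, 0 < c /\ (NN <= L)%nat /\ forall i b, (i < K)%nat -> P (F i b) ->
    forall y, agree L (F i b) y -> c <= g y.
Proof.
  intros H. assert (one : forall z, (P z -> exists L c, 0 < c /\ forall y, agree L z y -> c <= g y) ->
     exists L c, 0 < c /\ (P z -> forall y, agree L z y -> c <= g y)).
  { intros z Hz. destruct (classic (P z)) as [Hp|Hp].
    - destruct (Hz Hp) as [L [c [Hc HL]]]. exists L, c. split; auto.
    - exists O, 1. split; [lra|]. intro; contradiction. }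
  induction K.
  - exists NN, 1. split; [lra|]. split; [lia|]. intros; lia.
  - destruct IHK as [L [c [Hc [HNN HL]]]].
    destruct (one (F K false) (H K false)) as [L0 [c0 [Hc0 HL0]]].
    destruct (one (F K true) (H K true)) as [L1 [c1 [Hc1 HL1]]].
    exists (Nat.max L (Nat.max L0 L1)), (Rmin c (Rmin c0 c1)).
    split; [apply Rmin_glb_lt; [|apply Rmin_glb_lt]; assumption|]. split; [lia|].
    intros i b Hi Hp y Hy.
    pose proof (Rmin_l c (Rmin c0 c1)). pose proof (Rmin_r c (Rmin c0 c1)).
    pose proof (Rmin_l c0 c1). pose proof (Rmin_r c0 c1).
    destruct (Nat.eq_dec i K) as [->|Hne].
    + destruct b.
      * assert (c1 <= g y) by (apply HL1; [exact Hp| eapply agree_mono; [|exact Hy]; lia]). lra.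
      * assert (c0 <= g y) by (apply HL0; [exact Hp| eapply agree_mono; [|exact Hy]; lia]). lra.
    + assert (c <= g y) by (apply (HL i b); [lia| exact Hp| eapply agree_mono; [|exact Hy]; lia]). lra.
Qed.


Theorem mainTheorem6
  (A Astar V Vstar : Sigma -> R) (W : Sigma -> Sigma -> R) (mu0 : list bool -> R)
  (HA : holder A)
  (HW : involution_kernel A Astar W)
  (HmA : m_zero A) (HmAs : m_zero Astar)
  (HV : calibrated A V) (HVs : calibrated Astar Vstar)
  (HWnorm : V_sup_formula Astar V Vstar W)
  (* the maximizing probability of A* is unique (mu0) ... *)
  (Hmu0 : maximizing Astar mu0)
  (Huniq : forall mu, maximizing Astar mu -> forall u, mu u = mu0 u)
  (* ... and supported on a periodic orbit M = supp mu0 *)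
  (Hper : exists p N, (1 <= N)%nat /\ shiftn N p = p /\
            forall z, supp mu0 z <-> exists i, (i < N)%nat /\ z = shiftn i p)
  (* A is good: R* > 0 on P = {w not in M : sigma w in M} *)
  (Hgood : forall w, ~ supp mu0 w -> supp mu0 (shift w) -> Rstar Astar Vstar w > 0)
  (x wx : Sigma) (Hopt : optimal_pair Astar V Vstar W x wx) :
  (exists k, supp mu0 (shiftn k wx)) /\
  (forall k, supp mu0 (shiftn k wx) ->
     optimal_pair Astar V Vstar W (fst (hatTinvn k (x, wx))) (snd (hatTinvn k (x, wx)))).
Proof.
  split; [| intros k _; eapply part2; eassumption].
  destruct Hopt as [s [Hs Hb]].
  apply NNPP; intro Hnever.
  assert (Hnv : forall k, ~ supp mu0 (shiftn k wx)) by (intros k Hk; apply Hnever; exists k; exact Hk).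
  destruct (Astar_modulus A Astar W HA HW) as [E [th [Hth [HE Hm]]]].
  assert (HRpos : forall y, 0 <= Rstar Astar Vstar y).
  { intro y. destruct HVs as [_ [HVge _]]. specialize (HVge y). unfold Rstar. lra. }
  destruct (W_bounded W (proj1 HW)) as [CW HCW].
  set (Kc := W wx x - CW - V x - s - Vstar wx - s).
  assert (HK : forall N, - (- Kc) <= ssum (fun k => Astar (shiftn k wx)) N).
  { intro N. rewrite Ropp_involutive. rewrite (telescope Astar Vstar wx N).
    pose proof (Istar_shiftn Astar Vstar wx s Hs N) as HsN.
    destruct (HWnorm x) as [Hub _].
    assert (H1 : W (shiftn N wx) x - Vstar (shiftn N wx) -
                 (s - ssum (fun k => Rstar Astar Vstar (shiftn k wx)) N) <= V x).
    { apply Hub. eexists; eexists; split; [exact HsN| reflexivity]. }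
    pose proof (HCW (shiftn N wx) x wx x).
    pose proof (partial_le _ s (fun n => HRpos (shiftn n wx)) Hs N).
    pose proof (ssum_nonneg (fun k => Rstar Astar Vstar (shiftn k wx)) N (fun n => HRpos (shiftn n wx))).
    unfold Kc. lra. }
  destruct (KB Astar wx E th (- Kc) Hth HE Hm HK) as [mu [Hinv [[l [Hl Hl0]] Hzero]]].
  assert (Hl00 : l = 0) by (destruct HmAs as [Hle _]; pose proof (Hle mu l Hinv Hl); lra).
  subst l.
  assert (Heq : forall u, mu u = mu0 u) by (apply Huniq; split; assumption).
  destruct Hper as [p [NN [HN1 [HpN Hsupp]]]].
  set (good := fun L n => exists i, (i < NN)%nat /\ agree L (shiftn i p) (shiftn n wx)).
  assert (inf_good : forall L n0, exists n, (n0 <= n)%nat /\ good L n).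
  { intros L n0. apply NNPP; intro H.
    assert (Hz : mu (prefix L p) = 0).
    { apply Hzero. exists n0. intros n Hn. unfold cind.
      destruct (prefb (prefix L p) (shiftn n wx)) eqn:Ep; [|reflexivity].
      exfalso. apply H. exists n. split; [exact Hn|]. exists O. split; [lia|].
      apply prefb_prefix. exact Ep. }
    rewrite Heq in Hz.
    assert (Hp : supp mu0 p) by (apply (proj2 (Hsupp p)); exists O; split; [lia| reflexivity]).
    specialize (Hp L). lra. }
  assert (per : forall i m, shiftn i p (NN + m)%nat = shiftn i p m).
  { intros i m. rewrite <- (shiftn_ap NN (shiftn i p) m).
    assert (Eq0 : shiftn NN (shiftn i p) = shiftn i p).
    { rewrite shiftn_add, Nat.add_comm, <- shiftn_add, HpN. reflexivity. }
    rewrite Eq0. reflexivity. }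
  assert (inf_bad : forall n0, exists n, (n0 <= n)%nat /\ ~ good (S NN) n).
  { intro n0. apply NNPP; intro H.
    assert (Hall : forall n, (n0 <= n)%nat -> good (S NN) n).
    { intros n Hn. apply NNPP; intro H'. apply H. exists n; split; assumption. }
    set (y := shiftn n0 wx).
    assert (yper : forall m, y (NN + m)%nat = y m).
    { intro m. destruct (Hall (n0 + m)%nat ltac:(lia)) as [i [Hi Hag]].
      pose proof (Hag O ltac:(lia)) as E0. pose proof (Hag NN ltac:(lia)) as E1.
      assert (G1 : y (NN + m)%nat = shiftn (n0 + m) wx NN) by (unfold y; rewrite !shiftn_ap; f_equal; lia).
      assert (G0 : y m = shiftn (n0 + m) wx O) by (unfold y; rewrite !shiftn_ap; f_equal; lia).
      rewrite G1, G0, <- E1, <- E0, <- (per i O). f_equal; lia. }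
    destruct (Hall n0 (le_n n0)) as [i0 [Hi0 Hag0]].
    assert (Hyq : forall B m, (m < B)%nat -> y m = shiftn i0 p m).
    { induction B; intros m Hmb; [lia|].
      destruct (le_lt_dec NN m).
      - replace m with (NN + (m - NN))%nat by lia. rewrite yper, per. apply IHB. lia.
      - symmetry. apply Hag0. lia. }
    assert (Hy : y = shiftn i0 p) by (apply functional_extensionality; intro m; apply (Hyq (S m)); lia).
    apply (Hnv n0). fold y. apply (proj2 (Hsupp y)). exists i0. split; assumption. }
  set (F := fun i (b : bool) => tau (fun _ => b) (shiftn i p)).
  destruct (unif (Rstar Astar Vstar) (fun z => ~ supp mu0 z /\ supp mu0 (shift z)) F (S NN))
    with (K := NN) as [L [c [Hc [HL HLc]]]].
  { intros i b [Hn Hs']. apply pos_near.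
    - apply (Rstar_cont Astar Vstar E th (proj1 HVs) Hm Hth HE).
    - apply Hgood; assumption. }
  destruct (terms_small _ s c Hs Hc) as [N0 HN0].
  destruct (inf_bad N0) as [b [Hb0 Hbad]].
  assert (HbadL : ~ good L b).
  { intros [i [Hi Hag]]. apply Hbad. exists i. split; [exact Hi|]. eapply agree_mono; [|exact Hag]. exact HL. }
  destruct (inf_good L (S b)) as [g [Hg Hgg]].
  destruct (transition (good L) b HbadL (g - b)%nat) as [n [Hn [Hnb Hng]]].
  { replace (b + (g - b))%nat with g by lia. exact Hgg. }
  destruct Hng as [i [Hi Hag]].
  set (z' := F i (shiftn n wx O)).
  assert (Hz'ag : agree L z' (shiftn n wx)).
  { intros k Hk. destruct k as [|k].
    - reflexivity.
    - unfold z', F, tau. rewrite (Hag k ltac:(lia)). rewrite !shiftn_ap. f_equal. lia. }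
  assert (Hz'n : ~ supp mu0 z').
  { intro Hz. apply (proj1 (Hsupp z')) in Hz. destruct Hz as [j [Hj Hzj]].
    apply Hnb. exists j. split; [exact Hj|]. rewrite <- Hzj. exact Hz'ag. }
  assert (Hz's : supp mu0 (shift z')).
  { change (supp mu0 (shiftn i p)). apply (proj2 (Hsupp _)). exists i. split; [exact Hi| reflexivity]. }
  pose proof (HLc i (shiftn n wx O) Hi (conj Hz'n Hz's) (shiftn n wx) Hz'ag) as Hge.
  specialize (HN0 n ltac:(lia)). simpl in HN0. lra.
Qed.
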